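(* There is a constant $c>0$ such that for all $n$: if $R_1,\dots,R_\ell$ are ordered balanced set rectangles (each with respect to its own ordered balanced partition of $Z$), pairwise disjoint, with $\bigcup_{i\in[\ell]}R_i=\mathcal{L}_n$, then $\ell\ge 2^{cn}$.
   Context: $X=\{x_1,\dots,x_n\}$, $Y=\{y_1,\dots,y_n\}$, $Z=X\cup Y$, $z_i=x_i$ for $i\in[n]$, $z_i=y_{i-n}$ for $i\in[n+1,2n]$, $Z[i,j]=\{z_\ell: i\le\ell\le j\}$. $\mathcal{L}_n=\{U\subseteq Z : \exists i\in[n],\ x_i\in U \text{ and } y_i\in U\}$ (the set version of the language of words of length $2n$ over $\{a,b\}$ with two $a$'s at distance $n$). A partition $(\Pi_0,\Pi_1)$ of $Z$ is ordered (induced by $[i,j]$) if $\Pi_\ell=Z[i,j]$ for some $\ell\in\{0,1\}$; it is balanced if $2n/3\le|\Pi_0|,|\Pi_1|\le 4n/3$. A $(\Pi_0,\Pi_1)$-rectangle is a family $S\times T=\{U\cup V: U\in S,V\in T\}$ with $S\subseteq\mathcal{P}(\Pi_0)$, $T\subseteq\mathcal{P}(\Pi_1)$; it is ordered balanced if $(\Pi_0,\Pi_1)$ is ordered and balanced. *)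

(* Defs.v *)
From Stdlib Require Import Reals.
From mathcomp Require Import all_boot.
Set Implicit Arguments. Unset Strict Implicit. Unset Printing Implicit Defensive.

(* Z = {z_1,...,z_2n} is encoded as 'I_(2*n): the ordinal k stands for z_(k+1).
   Hence x_i (i in [n]) is the ordinal i-1 and y_i is the ordinal n+i-1. *)

Definition Lang (n : nat) : {set {set 'I_(2*n)}} :=
  [set U : {set 'I_(2*n)} |
     [exists x in U, exists y in U, (val x < n) && (val y == val x + n)]].

(* Z[i,j] = {z_l : i <= l <= j}  (1-based indices as in the paper) *)
Definition Zint (n i j : nat) : {set 'I_(2*n)} :=
  [set k : 'I_(2*n) | (i <= (val k).+1) && ((val k).+1 <= j)].

Definition ordered_part (n : nat) (P0 : {set 'I_(2*n)}) : Prop :=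
  exists i j : nat, P0 = Zint n i j \/ ~: P0 = Zint n i j.

Definition balanced_part (n : nat) (P0 : {set 'I_(2*n)}) : Prop :=
  [/\ 2 * n <= 3 * #|P0|, 3 * #|P0| <= 4 * n,
      2 * n <= 3 * #|~: P0| & 3 * #|~: P0| <= 4 * n].

Definition is_rectangle (n : nat) (P0 : {set 'I_(2*n)})
    (R : {set {set 'I_(2*n)}}) : Prop :=
  exists (S T : {set {set 'I_(2*n)}}),
    [/\ S \subset powerset P0, T \subset powerset (~: P0) &
        R = [set U :|: V | U in S, V in T]].

Definition ob_rectangle (n : nat) (R : {set {set 'I_(2*n)}}) : Prop :=
  exists P0 : {set 'I_(2*n)},
    [/\ ordered_part P0, balanced_part P0 & is_rectangle P0 R].

(* Main.v *)
Require Import Defs.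
From Stdlib Require Import Reals ZArith.
From mathcomp Require Import all_boot all_order all_algebra.
From mathcomp Require Import ring lra zify.
Set Implicit Arguments. Unset Strict Implicit. Unset Printing Implicit Defensive.
Import Order.TTheory GRing.Theory Num.Theory.

Lemma expn_pow m k : expn m k = Nat.pow m k.
Proof. elim: k => // k IH. by rewrite expnS IH. Qed.

Lemma genK a b c d e : Z.le (Z.mul (Z.of_nat a) (Z.pow (Z.of_nat b) (Z.of_nat c))) (Z.pow (Z.of_nat d) (Z.of_nat e)) ->
  a * b ^ c <= d ^ e.
Proof.
move=> H. apply/ssrnat.leP. apply Nat2Z.inj_le. rewrite !expn_pow mulnE Nat2Z.inj_mul !Nat2Z.inj_pow. exact H.
Qed.

Lemma K : 4 * 576 ^ 18 <= 625 ^ 18.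
Proof. apply: genK. vm_compute. discriminate. Qed.

Lemma two4 n : 4 <= n -> 2 * 4 ^ n <= 5 ^ n.
Proof.
move=> Hn. have [k ->] : exists k, n = 4 + k by exists (n - 4); lia.
rewrite !expnD mulnA. apply: leq_mul => //.
by case: (k) => [//|k']; rewrite leq_exp2r.
Qed.

Lemma numeric n l : 108 <= n ->
  (5 ^ n - 4 ^ n) ^ 6 <= l ^ 6 * (36 ^ n * 20 ^ (2 * n)) -> 2 ^ n <= l ^ 108.
Proof.
move=> Hn H.
have Ha : 5 ^ n <= 2 * (5 ^ n - 4 ^ n).
  have := @two4 n (leq_trans (isT : 4 <= 108) Hn). lia.
have Hb : (5 ^ n) ^ 6 <= 64 * (l ^ 6 * (36 ^ n * 20 ^ (2 * n))).
  apply: leq_trans (_ : (2 * (5 ^ n - 4 ^ n)) ^ 6 <= _).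
    by rewrite leq_exp2r.
  by rewrite expnMn leq_mul2l H orbT.
have E5 : (5 ^ n) ^ 6 = 25 ^ n * 625 ^ n.
  by rewrite -expnM mulnC expnM -expnMn.
have E36 : 36 ^ n * 20 ^ (2 * n) = 25 ^ n * 576 ^ n.
  rewrite expnM -[20 ^ 2]/(25 * 16) -[576]/(36 * 16) !expnMn.
  by rewrite mulnCA mulnA.
rewrite E5 E36 in Hb.
have Hc : 625 ^ n <= 64 * l ^ 6 * 576 ^ n.
  have Hp : 0 < 25 ^ n by rewrite expn_gt0.
  rewrite -(leq_pmul2l Hp). apply: leq_trans Hb _.
  by apply: eq_leq; ring.
have Hd : (625 ^ n) ^ 18 <= 64 ^ 18 * l ^ 108 * (576 ^ n) ^ 18.
  apply: leq_trans (_ : (64 * l ^ 6 * 576 ^ n) ^ 18 <= _).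
    by rewrite leq_exp2r.
  by rewrite (expnMn (64 * l ^ 6) (576 ^ n) 18) (expnMn 64 (l ^ 6) 18) -(expnM l 6 18).
have He : 4 ^ n * (576 ^ n) ^ 18 <= (625 ^ n) ^ 18.
  rewrite (expnAC 576 n 18) (expnAC 625 n 18) -expnMn.
  rewrite leq_exp2r; [exact: K | lia].
have Hf : 4 ^ n <= 64 ^ 18 * l ^ 108.
  have Hp : 0 < (576 ^ n) ^ 18 by rewrite !expn_gt0.
  rewrite -(leq_pmul2r Hp). exact: leq_trans He Hd.
have E64 : 64 ^ 18 = 2 ^ 108 by rewrite -[64]/(2 ^ 6) -expnM.
rewrite E64 in Hf.
have Hg : 2 ^ n * 2 ^ 108 <= 2 ^ 108 * l ^ 108.
  apply: leq_trans Hf. rewrite -expnD (_ : 4 ^ n = 2 ^ (2 * n)); last by rewrite expnM.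
  have Hle : n + 108 <= 2 * n by lia.
  exact: (leq_pexp2l (isT : 0 < 2) Hle).
have Hp : 0 < 2 ^ 108 by rewrite expn_gt0.
by rewrite mulnC leq_pmul2l in Hg.
Qed.


Section Pairs.
Variable n : nat.

Lemma xz_proof (t : 'I_n) : val t < 2 * n.
Proof. case: t => t /= Ht. rewrite mul2n -addnn. exact: ltn_addr. Qed.
Lemma yz_proof (t : 'I_n) : val t + n < 2 * n.
Proof. case: t => t /= Ht. rewrite mul2n -addnn ltn_add2r. exact: Ht. Qed.

Definition xz (t : 'I_n) : 'I_(2*n) := Ordinal (xz_proof t).
Definition yz (t : 'I_n) : 'I_(2*n) := Ordinal (yz_proof t).

Lemma xz_inj : injective xz.
Proof. move=> a b /(congr1 val) /= H. exact: val_inj. Qed.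
Lemma yz_inj : injective yz.
Proof. move=> a b /(congr1 val) /= /eqP. rewrite eqn_add2r => /eqP H. exact: val_inj. Qed.
Lemma xz_neq_yz (a b : 'I_n) : xz a != yz b.
Proof. apply/eqP => /(congr1 val) /= H. have := ltn_ord a. rewrite H. by rewrite ltnNge leq_addl. Qed.

Lemma cover_z (z : 'I_(2*n)) : exists t, z = xz t \/ z = yz t.
Proof.
case: (ltnP (val z) n) => Hz.
  exists (Ordinal Hz); left; exact: val_inj.
have H2 : val z - n < n.
  have Hz2 : val z < n + n by rewrite addnn -mul2n; exact: ltn_ord. by rewrite ltn_subLR.
exists (Ordinal H2); right; apply: val_inj => /=. by rewrite subnK.
Qed.

Definition enc (f : {ffun 'I_n -> bool * bool}) : {set 'I_(2*n)} :=
  [set z | [exists t, ((f t).1 && (z == xz t)) || ((f t).2 && (z == yz t))]].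
Definition dec (W : {set 'I_(2*n)}) : {ffun 'I_n -> bool * bool} :=
  [ffun t => (xz t \in W, yz t \in W)].

Lemma enc_x f t : (xz t \in enc f) = (f t).1.
Proof.
rewrite inE; apply/existsP/idP => [[t' /orP[/andP[H /eqP E]|/andP[H /eqP E]]]|H].
- by rewrite (xz_inj E).
- by move: (xz_neq_yz t t'); rewrite E eqxx.
- exists t; by rewrite H eqxx.
Qed.
Lemma enc_y f t : (yz t \in enc f) = (f t).2.
Proof.
rewrite inE; apply/existsP/idP => [[t' /orP[/andP[H /eqP E]|/andP[H /eqP E]]]|H].
- by move: (xz_neq_yz t' t); rewrite -E eqxx.
- by rewrite (yz_inj E).
- exists t; by rewrite H eqxx orbT.
Qed.

Lemma encK : cancel enc dec.
Proof. move=> f; apply/ffunP => t; rewrite ffunE enc_x enc_y. by case: (f t). Qed.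
Lemma decK : cancel dec enc.
Proof.
move=> W; apply/setP => z. have [t [->|->]] := cover_z z.
  by rewrite enc_x ffunE.
by rewrite enc_y ffunE.
Qed.

Local Open Scope ring_scope.
Lemma sum_mul (I : finType) (P : pred I) (a b : I -> int) :
  (\sum_(i | P i) a i) * (\sum_(j | P j) b j) = \sum_(i | P i) \sum_(j | P j) a i * b j.
Proof. rewrite mulr_suml; apply: eq_bigr => i _; by rewrite mulr_sumr. Qed.

Lemma wCS (I : finType) (P : pred I) (m y : I -> int) :
  (forall i, 0 <= m i) ->
  (\sum_(i | P i) m i * y i) ^+ 2 <= (\sum_(i | P i) m i) * (\sum_(i | P i) m i * y i ^+ 2).
Proof.
move=> Hm.
set A := \sum_(i | P i) m i. set B := \sum_(i | P i) m i * y i. set C := \sum_(i | P i) m i * y i ^+ 2.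
have HD : 0 <= \sum_(i | P i) \sum_(j | P j) m i * m j * (y i - y j) ^+ 2.
  apply: sumr_ge0 => i _; apply: sumr_ge0 => j _.
  by rewrite mulr_ge0 ?sqr_ge0 // mulr_ge0.
have E : \sum_(i | P i) \sum_(j | P j) m i * m j * (y i - y j) ^+ 2 =
   C * A + A * C - (B * B) *+ 2.
  rewrite /A /B /C !sum_mul -!sumrMnl -!big_split /= -sumrB.
  apply: eq_bigr => i _. rewrite -!sumrMnl -!big_split /= -sumrB. apply: eq_bigr => j _.
  ring.
rewrite E in HD. rewrite expr2. lra.
Qed.

Lemma phi_rect (T0 : finType) (P0 : {set T0}) (S T : {set {set T0}}) (F : {set T0} -> int) :
  S \subset powerset P0 -> T \subset powerset (~: P0) ->
  \sum_(W in [set U :|: V | U in S, V in T]) F W = \sum_(A in S) \sum_(B in T) F (A :|: B).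
Proof.
move=> HS HT.
have -> : [set U :|: V | U in S, V in T] =
   [set (fun p : {set T0} * {set T0} => p.1 :|: p.2) x | x in [pred p | (p.1 \in S) && (p.2 \in T)]].
  apply/setP => W; apply/imset2P/imsetP.
    case=> U V HU HV ->. by exists (U, V) => //=; rewrite inE HU HV.
  case=> [[U V]] /andP /= [HU HV] ->. by exists U V.
rewrite big_imset /=.
  rewrite pair_big /=. by apply: eq_bigl => p; rewrite inE.
move=> [U V] [U' V'] /andP /= [HU HV] /andP /= [HU' HV'] E.
have HU0 : U \subset P0 by move: (subsetP HS _ HU); rewrite inE.
have HU0' : U' \subset P0 by move: (subsetP HS _ HU'); rewrite inE.
have HV0 : V \subset ~: P0 by move: (subsetP HT _ HV); rewrite inE.
have HV0' : V' \subset ~: P0 by move: (subsetP HT _ HV'); rewrite inE.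
have key : forall (A B : {set T0}), A \subset P0 -> B \subset ~: P0 ->
   (A :|: B) :&: P0 = A /\ (A :|: B) :&: ~: P0 = B.
  move=> A B HA HB; split; apply/setP => z; rewrite !inE;
  move: (subsetP HA z) (subsetP HB z); rewrite !inE;
  case: (z \in A); case: (z \in B); case: (z \in P0); move=> H1 H2 //;
  first [discriminate (H1 isT) | discriminate (H2 isT)].
have [E1 E2] := key _ _ HU0 HV0. have [E1' E2'] := key _ _ HU0' HV0'.
have -> : U = U' by rewrite -E1 -E1' E.
have -> : V = V' by rewrite -E2 -E2' E.
by [].
Qed.

Lemma FL (h : 'I_n -> bool -> bool -> int) :
  \sum_(W : {set 'I_(2*n)}) \prod_(t < n) h t (xz t \in W) (yz t \in W) =
  \prod_(t < n) \sum_(p : bool * bool) h t p.1 p.2.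
Proof.
rewrite bigA_distr_bigA /=.
rewrite (reindex enc); last by exists dec => x _; [exact: encK | exact: decK].
apply: eq_bigr => f _; apply: eq_bigr => t _. by rewrite enc_x enc_y.
Qed.


Lemma sum_bb (F : bool -> bool -> int) :
  \sum_(p : bool * bool) F p.1 p.2 = F true true + F true false + F false true + F false false.
Proof.
rewrite -(pair_big xpredT xpredT F) /= !big_bool /=. by rewrite !addrA.
Qed.

Definition ind (b : bool) : int := if b then 1 else 0.

Lemma prod_ind (P : 'I_n -> bool) : \prod_(t < n) ind (P t) = ind [forall t, P t].
Proof.
case: (boolP [forall t, P t]) => [/forallP H|/forallPn [t Ht]].
  by rewrite big1 // => t _; rewrite /ind H.
by rewrite (bigD1 t) //= /ind (negbTE Ht) mul0r.
Qed.

Definition q (a b : bool) : int :=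
  match a, b with false, false => 1 | true, true => -1 | _, _ => 2 end.
Definition w (W : {set 'I_(2*n)}) : int := \prod_(t < n) q (xz t \in W) (yz t \in W).
Definition phi (X : {set {set 'I_(2*n)}}) : int := \sum_(W in X) w W.

Lemma LangE W : (W \in Lang n) = [exists t, (xz t \in W) && (yz t \in W)].
Proof.
rewrite /Lang inE; apply/idP/idP.
  case/exists_inP => x Hx /exists_inP [y Hy /andP [Hxn /eqP Hyx]].
  apply/existsP; exists (Ordinal Hxn).
  have -> : xz (Ordinal Hxn) = x by exact: val_inj.
  have -> : yz (Ordinal Hxn) = y by apply: val_inj => /=; rewrite Hyx.
  by rewrite Hx Hy.
case/existsP => t /andP [Hx Hy]. apply/exists_inP; exists (xz t) => //.
apply/exists_inP; exists (yz t) => //=. by rewrite ltn_ord eqxx.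
Qed.

Lemma phi_Lang : phi (Lang n) = 4 ^+ n - 5 ^+ n.
Proof.
rewrite /phi big_mkcond /=.
have E : forall W : {set 'I_(2*n)}, (if W \in Lang n then w W else 0) =
   w W - \prod_(t < n) (ind (~~ ((xz t \in W) && (yz t \in W))) * q (xz t \in W) (yz t \in W)).
  move=> W. rewrite big_split /= prod_ind LangE /w.
  case: (boolP [exists t, _]) => [He|Hn].
    have -> : [forall t, ~~ ((xz t \in W) && (yz t \in W))] = false.
      apply/negbTE/negP => /forallP H. case/existsP: He => t Ht. by move: (H t); rewrite Ht.
    by rewrite /ind mul0r subr0.
  have -> : [forall t, ~~ ((xz t \in W) && (yz t \in W))] = true.
    apply/forallP => t; apply/negP => Ht. by move/negP: Hn; apply; apply/existsP; exists t.
  by rewrite /ind mul1r subrr.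
rewrite (eq_bigr _ (fun W _ => E W)) sumrB /w.
rewrite (FL (fun t a b => q a b)) (FL (fun t a b => ind (~~ (a && b)) * q a b)).
rewrite (eq_bigr (fun _ => 4)); last by move=> t _; rewrite sum_bb.
rewrite [X in _ - X](eq_bigr (fun _ => 5)); last by move=> t _; rewrite (sum_bb (fun a b => ind (~~ (a && b)) * q a b)).
by rewrite !prodr_const card_ord.
Qed.


Lemma subset_ind (A P : {set 'I_(2*n)}) : ind (A \subset P) =
  \prod_(t < n) ind (((xz t \in A) ==> (xz t \in P)) && ((yz t \in A) ==> (yz t \in P))).
Proof.
rewrite prod_ind; congr ind; apply/subsetP/forallP => [H t|H z].
  by apply/andP; split; apply/implyP => /H.
have [t [->|->]] := cover_z z; by case/andP: (H t) => /implyP ? /implyP ?.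
Qed.

Lemma FLsub (P : {set 'I_(2*n)}) (F : 'I_n -> bool -> bool -> int) :
  \sum_(A : {set 'I_(2*n)}) ind (A \subset P) * \prod_(t < n) F t (xz t \in A) (yz t \in A) =
  \prod_(t < n) \sum_(p : bool * bool)
     ind ((p.1 ==> (xz t \in P)) && (p.2 ==> (yz t \in P))) * F t p.1 p.2.
Proof.
rewrite -(FL (fun t a b => ind ((a ==> (xz t \in P)) && (b ==> (yz t \in P))) * F t a b)).
apply: eq_bigr => A _. by rewrite subset_ind -big_split.
Qed.

Lemma FLsub1 (P : {set 'I_(2*n)}) :
  \sum_(A : {set 'I_(2*n)}) ind (A \subset P) =
  \prod_(t < n) \sum_(p : bool * bool) ind ((p.1 ==> (xz t \in P)) && (p.2 ==> (yz t \in P))).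
Proof.
have := FLsub P (fun _ _ _ => (1 : int)).
under eq_bigr => A _ do rewrite big1_eq mulr1.
move=> ->. apply: eq_bigr => t _. by apply: eq_bigr => p _; rewrite mulr1.
Qed.

Section Rect.
Variable P0 : {set 'I_(2*n)}.
Hypothesis NoOut : forall t, (xz t \in P0) || (yz t \in P0).

Definition spl t := (xz t \in P0) != (yz t \in P0).
Definition sN := #|[pred t | spl t]|.
Definition uN := #|[pred t | ~~ spl t]|.

Lemma su_n : (sN + uN)%N = n.
Proof. by rewrite /sN /uN cardC card_ord. Qed.

Lemma prod_spl (a b : int) : \prod_(t < n) (if spl t then a else b) = a ^+ sN * b ^+ uN.
Proof.
rewrite (bigID spl) /=. congr (_ * _).
  rewrite (eq_bigr (fun _ => a)); last by move=> t ->.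
  by rewrite -(prodr_const [pred t | spl t]).
rewrite (eq_bigr (fun _ => b)); last by move=> t /negbTE ->.
by rewrite -(prodr_const [pred t | ~~ spl t]).
Qed.

Definition qU t a b := if spl t then 1 else q a b.
Definition qS t a b := if spl t then q a b else 1.
Definition wU (W : {set 'I_(2*n)}) := \prod_(t < n) qU t (xz t \in W) (yz t \in W).
Definition wS (W : {set 'I_(2*n)}) := \prod_(t < n) qS t (xz t \in W) (yz t \in W).

Lemma nspl t : ~~ spl t -> (xz t \in P0) /\ (yz t \in P0).
Proof. move: (NoOut t); rewrite /spl; by case: (xz t \in P0); case: (yz t \in P0). Qed.

Lemma w_split (A B : {set 'I_(2*n)}) : B \subset ~: P0 -> w (A :|: B) = wU A * wS (A :|: B).
Proof.
move=> HB. rewrite /w /wU /wS -big_split /=. apply: eq_bigr => t _.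
rewrite /qU /qS. case: (boolP (spl t)) => Hs; first by rewrite mul1r.
have [Hx Hy] := nspl Hs.
have Hbx : (xz t \in B) = false.
  by apply/negbTE/negP => /(subsetP HB); rewrite inE Hx.
have Hby : (yz t \in B) = false.
  by apply/negbTE/negP => /(subsetP HB); rewrite inE Hy.
by rewrite !inE Hbx Hby !orbF mulr1.
Qed.

Lemma S1 : \sum_(A : {set 'I_(2*n)}) ind (A \subset P0) * `|wU A| = 2 ^+ sN * 6 ^+ uN.
Proof.
under eq_bigr => A _ do rewrite /wU normr_prod.
rewrite (FLsub P0 (fun t a b => `|qU t a b|)) -prod_spl.
apply: eq_bigr => t _.
rewrite (sum_bb (fun a b => ind ((a ==> (xz t \in P0)) && (b ==> (yz t \in P0))) * `|qU t a b|)).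
rewrite /qU /spl. move: (NoOut t).
by case: (xz t \in P0); case: (yz t \in P0).
Qed.

Lemma Tcount : \sum_(B : {set 'I_(2*n)}) ind (B \subset ~: P0) = 2 ^+ sN.
Proof.
rewrite FLsub1.
have -> : (2 : int) ^+ sN = 2 ^+ sN * 1 ^+ uN by rewrite expr1n mulr1.
rewrite -prod_spl.
apply: eq_bigr => t _.
rewrite (sum_bb (fun a b => ind ((a ==> (xz t \in ~: P0)) && (b ==> (yz t \in ~: P0))))).
rewrite !inE /spl. move: (NoOut t).
by case: (xz t \in P0); case: (yz t \in P0).
Qed.

Lemma Pcount : \sum_(A : {set 'I_(2*n)}) ind (A \subset P0) = 2 ^+ sN * 4 ^+ uN.
Proof.
rewrite FLsub1 -prod_spl.
apply: eq_bigr => t _.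
rewrite (sum_bb (fun a b => ind ((a ==> (xz t \in P0)) && (b ==> (yz t \in P0))))).
rewrite /spl. move: (NoOut t).
by case: (xz t \in P0); case: (yz t \in P0).
Qed.


Definition agree (B B' : {set 'I_(2*n)}) t :=
  ((xz t \in B) == (xz t \in B')) && ((yz t \in B) == (yz t \in B')).

Lemma IPt (B B' : {set 'I_(2*n)}) t : B \subset ~: P0 -> B' \subset ~: P0 ->
  \sum_(p : bool * bool) ind ((p.1 ==> (xz t \in P0)) && (p.2 ==> (yz t \in P0))) *
     (`|qU t p.1 p.2| * (qS t (p.1 || (xz t \in B)) (p.2 || (yz t \in B)) *
                          qS t (p.1 || (xz t \in B')) (p.2 || (yz t \in B'))))
  = if spl t then (if agree B B' t then 5 else 0) else 6.
Proof.
move=> HB HB'.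
have Hn : forall (C : {set 'I_(2*n)}) z, C \subset ~: P0 -> z \in P0 -> (z \in C) = false.
  by move=> C z HC Hz; apply/negbTE/negP => /(subsetP HC); rewrite inE Hz.
rewrite (sum_bb (fun a b => ind ((a ==> (xz t \in P0)) && (b ==> (yz t \in P0))) *
     (`|qU t a b| * (qS t (a || (xz t \in B)) (b || (yz t \in B)) *
                          qS t (a || (xz t \in B')) (b || (yz t \in B')))))).
rewrite /qU /qS /spl /agree. move: (NoOut t).
case Ex: (xz t \in P0); case Ey: (yz t \in P0) => //= _.
all: try rewrite !(Hn _ _ HB Ex) !(Hn _ _ HB' Ex).
all: try rewrite !(Hn _ _ HB Ey) !(Hn _ _ HB' Ey).
all: by case: (xz t \in B); case: (xz t \in B'); case: (yz t \in B); case: (yz t \in B').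
Qed.

Lemma IP (B B' : {set 'I_(2*n)}) : B \subset ~: P0 -> B' \subset ~: P0 ->
  \sum_(A : {set 'I_(2*n)}) ind (A \subset P0) * (`|wU A| * (wS (A :|: B) * wS (A :|: B')))
  = if B == B' then 5 ^+ sN * 6 ^+ uN else 0.
Proof.
move=> HB HB'.
under eq_bigr => A _ do rewrite /wU /wS normr_prod -!big_split /=.
under eq_bigr => A _ do under eq_bigr => t _ do rewrite !inE.
rewrite (FLsub P0 (fun t a b => `|qU t a b| * (qS t (a || (xz t \in B)) (b || (yz t \in B)) *
                          qS t (a || (xz t \in B')) (b || (yz t \in B'))))).
under eq_bigr => t _ do rewrite IPt //.
case: eqP => [<-|Hne].
  rewrite -prod_spl; apply: eq_bigr => t _. by rewrite /agree !eqxx.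
have [t Ht] : exists t, spl t && ~~ agree B B' t.
  have [z Hz] : exists z, (z \in B) != (z \in B').
    apply/existsP; rewrite -negb_forall; apply/negP => /forallP H.
    by apply: Hne; apply/setP => z; apply/eqP; exact: H z.
  have Hz0 : z \notin P0.
    case/boolP: (z \in B) Hz => HzB Hz.
      by move/(subsetP HB): HzB; rewrite inE.
    have HzB' : z \in B' by move: Hz; case: (z \in B').
    by move/(subsetP HB'): HzB'; rewrite inE.
  have [t [Et|Et]] := cover_z z; exists t; subst z.
  - rewrite /spl /agree (negbTE Hz0). move: (NoOut t); rewrite (negbTE Hz0) /= => ->.
    by rewrite (negbTE Hz).
  - rewrite /spl /agree (negbTE Hz0). move: (NoOut t); rewrite (negbTE Hz0) orbF => ->.
    by rewrite (negbTE Hz) andbF.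
rewrite (bigD1 t) //=. case/andP: Ht => -> /negbTE ->. by rewrite mul0r.
Qed.


Lemma ind_ge0 b : 0 <= ind b. Proof. by case: b. Qed.

Lemma core (S T : {set {set 'I_(2*n)}}) : S \subset powerset P0 -> T \subset powerset (~: P0) ->
  (\sum_(A in S) \sum_(B in T) w (A :|: B)) ^+ 2 <= 36 ^+ uN * 20 ^+ sN.
Proof.
move=> HS HT.
have HT' : forall B, B \in T -> B \subset ~: P0 by move=> B /(subsetP HT); rewrite inE.
have HS' : forall A, A \in S -> A \subset P0 by move=> A /(subsetP HS); rewrite inE.
pose h A := \sum_(B in T) wS (A :|: B).
have E1 : \sum_(A in S) \sum_(B in T) w (A :|: B) = \sum_(A in S) wU A * h A.
  apply: eq_bigr => A _; rewrite /h mulr_sumr; apply: eq_bigr => B HB; exact: w_split (HT' _ HB).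
rewrite E1.
have N1 : `|\sum_(A in S) wU A * h A| <= \sum_(A in S) `|wU A| * `|h A|.
  apply: (le_trans (ler_norm_sum _ _ _)). by under eq_bigr do rewrite normrM.
have N2 : (\sum_(A in S) wU A * h A) ^+ 2 <= (\sum_(A in S) `|wU A| * `|h A|) ^+ 2.
  rewrite -real_normK ?num_real // !expr2. by apply: ler_pM.
have CS := @wCS _ (fun A => A \in S) (fun A => `|wU A|) (fun A => `|h A|) (fun _ => normr_ge0 _).
have X1 : \sum_(A in S) `|wU A| <= \sum_(A : {set 'I_(2*n)}) ind (A \subset P0) * `|wU A|.
  rewrite big_mkcond /=; apply: ler_sum => A _. case: ifP => HA.
    by rewrite (HS' A HA) /ind mul1r.
  by rewrite mulr_ge0 ?ind_ge0.
have X2 : \sum_(A in S) `|wU A| * `|h A| ^+ 2 <= \sum_(A : {set 'I_(2*n)}) ind (A \subset P0) * (`|wU A| * `|h A| ^+ 2).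
  rewrite big_mkcond /=; apply: ler_sum => A _. case: ifP => HA.
    by rewrite (HS' A HA) /ind mul1r.
  by rewrite mulr_ge0 ?ind_ge0 // mulr_ge0 // exprn_ge0.
have E2 : \sum_(A : {set 'I_(2*n)}) ind (A \subset P0) * (`|wU A| * `|h A| ^+ 2) =
   \sum_(B in T) \sum_(B' in T) \sum_(A : {set 'I_(2*n)}) ind (A \subset P0) * (`|wU A| * (wS (A :|: B) * wS (A :|: B'))).
  under eq_bigr => A _ do rewrite real_normK ?num_real // expr2 /h sum_mul !mulr_sumr.
  rewrite exchange_big; apply: eq_bigr => B _.
  under eq_bigr => A _ do rewrite !mulr_sumr.
  by rewrite exchange_big.
have E3 : \sum_(A : {set 'I_(2*n)}) ind (A \subset P0) * (`|wU A| * `|h A| ^+ 2) = (5 ^+ sN * 6 ^+ uN) *+ #|T|.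
  rewrite E2 -sumr_const. apply: eq_bigr => B HB.
  under eq_bigr => B' HB' do rewrite IP ?HT' //.
  rewrite (bigD1 B) //= eqxx big1 ?addr0 // => B' /andP [_ /negbTE]. by rewrite eq_sym => ->.
have HTc : (#|T|%:R : int) <= 2 ^+ sN.
  rewrite -Tcount -sumr_const big_mkcond /=; apply: ler_sum => B _.
  case: ifP => HB; last exact: ind_ge0.
  by rewrite (HT' B HB).
rewrite E3 S1 in X1 X2.
apply: (le_trans N2). apply: (le_trans CS).
apply: (le_trans (ler_pM _ _ X1 X2)); first exact: sumr_ge0.
  by apply: sumr_ge0 => A _; rewrite mulr_ge0 // exprn_ge0.
have -> : (36 : int) ^+ uN * 20 ^+ sN = 2 ^+ sN * 6 ^+ uN * (5 ^+ sN * 6 ^+ uN * 2 ^+ sN).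
  have -> : (36 : int) = 6 * 6 by [].
  have -> : (20 : int) = 2 * 5 * 2 by [].
  rewrite !exprMn. ring.
apply: ler_pM.
- by rewrite mulr_ge0 // exprn_ge0.
- by rewrite mulrn_wge0 // mulr_ge0 // exprn_ge0.
- exact: lexx.
rewrite -mulr_natr; apply: ler_pM => //; by rewrite mulr_ge0 // exprn_ge0.
Qed.


Lemma pow_subset : \sum_(A : {set 'I_(2*n)}) ind (A \subset P0) = (2 ^ #|P0|)%:R.
Proof.
rewrite -card_powerset -sumr_const [RHS]big_mkcond /=. apply: eq_bigr => A _.
by rewrite inE /ind; case: (A \subset P0).
Qed.

Lemma u_bound : (3 * #|P0| <= 4 * n)%N -> (3 * uN <= n)%N.
Proof.
move=> Hb.
have E : (2 ^ #|P0|)%N = (2 ^ (sN + 2 * uN))%N.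
  apply/eqP; rewrite -(@eqr_nat int) -pow_subset Pcount.
  rewrite expnD natrM !natrX exprM. have -> : (2:int) ^+ 2 = 4 by []. by [].
have := expnI (isT : (1 < 2)%N) E. have := su_n. lia.
Qed.

Lemma rect_bound (S T : {set {set 'I_(2*n)}}) : S \subset powerset P0 -> T \subset powerset (~: P0) ->
  (3 * #|P0| <= 4 * n)%N ->
  (absz (\sum_(A in S) \sum_(B in T) w (A :|: B))%R ^ 6 <= 36 ^ n * 20 ^ (2 * n))%N.
Proof.
move=> HS HT Hb.
have H1 := core HS HT.
set X := \sum_(A in S) \sum_(B in T) w (A :|: B) in H1 *.
have H2 : (absz X ^ 2 <= 36 ^ uN * 20 ^ sN)%N.
  by rewrite -(@ler_nat int) natrM !natrX natz abszE real_normK ?num_real.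
have Hu := u_bound Hb. have Hsu := su_n.
have [r Hr] : exists r, sN = (2 * uN + r)%N by exists (sN - 2 * uN)%N; lia.
have Hn : n = (3 * uN + r)%N by lia.
have H3 : ((36 ^ uN * 20 ^ sN) ^ 3 <= 36 ^ n * 20 ^ (2 * n))%N.
  have Hcd : (20 ^ r <= 36 ^ r)%N by case: (r) => [//|r']; rewrite leq_exp2r.
  rewrite Hr Hn.
  have -> : (20 ^ (2 * uN + r) = (20 ^ uN) ^ 2 * 20 ^ r)%N by rewrite expnD -expnM [(uN * 2)%N]mulnC.
  have -> : (36 ^ (3 * uN + r) = (36 ^ uN) ^ 3 * 36 ^ r)%N by rewrite expnD -expnM [(uN * 3)%N]mulnC.
  have -> : (20 ^ (2 * (3 * uN + r)) = (20 ^ uN) ^ 6 * (20 ^ r) ^ 2)%N.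
    rewrite mulnDr expnD -!expnM. congr (20 ^ _ * 20 ^ _)%N; lia.
  move: Hcd. move: (36 ^ uN)%N (20 ^ uN)%N (20 ^ r)%N (36 ^ r)%N => p q c d Hcd.
  have -> : ((p * (q ^ 2 * c)) ^ 3 = (p ^ 3 * q ^ 6 * c ^ 2) * c)%N by ring.
  have -> : (p ^ 3 * d * (q ^ 6 * c ^ 2) = (p ^ 3 * q ^ 6 * c ^ 2) * d)%N by ring.
  by rewrite leq_mul2l Hcd orbT.
apply: leq_trans H3.
have -> : (6 = 2 * 3)%N by []. rewrite expnM. by rewrite leq_exp2r.
Qed.

End Rect.

Lemma zint_cases i j :
  (forall t, (xz t \in Zint n i j) || (yz t \in Zint n i j)) \/
  (forall t, (xz t \notin Zint n i j) || (yz t \notin Zint n i j)).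
Proof.
case: (boolP [forall t, (xz t \in Zint n i j) || (yz t \in Zint n i j)]) => [/forallP H|/forallPn [t Ht]].
  by left.
right => u. move: Ht. rewrite !inE /=. have := ltn_ord t. have := ltn_ord u. move=> *. lia.
Qed.

Lemma NoOut_or (P0 : {set 'I_(2*n)}) : ordered_part P0 ->
  (forall t, (xz t \in P0) || (yz t \in P0)) \/ (forall t, (xz t \in ~: P0) || (yz t \in ~: P0)).
Proof.
case=> i [j [E|E]].
  case: (zint_cases i j) => H; [left|right] => t; rewrite ?inE E; exact: H.
case: (zint_cases i j) => H; [right|left] => t.
  by rewrite E.
by move: (H t); rewrite -E !inE !negbK.
Qed.

Lemma rect_ob (R : {set {set 'I_(2*n)}}) : ob_rectangle R ->
  (absz (phi R) ^ 6 <= 36 ^ n * 20 ^ (2 * n))%N.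
Proof.
case=> P0 [Hord [_ Hb1 _ Hb2] [S [T [HS HT ->]]]].
rewrite /phi (phi_rect w HS HT).
case: (NoOut_or Hord) => HN.
  exact (rect_bound HN HS HT Hb1).
rewrite exchange_big /=.
under eq_bigr => B _ do under eq_bigr => A _ do rewrite setUC.
have HS' : S \subset powerset (~: ~: P0) by rewrite setCK.
exact (rect_bound HN HT HS' Hb2).
Qed.

End Pairs.

Open Scope ring_scope.
Lemma sum_bound n l (Rs : 'I_l -> {set {set 'I_(2*n)}}) :
  (forall k, ob_rectangle (Rs k)) ->
  (forall k1 k2 : 'I_l, k1 != k2 -> [disjoint Rs k1 & Rs k2]) ->
  \bigcup_(k < l) Rs k = Lang n ->
  ((5 ^ n - 4 ^ n) ^ 6 <= l ^ 6 * (36 ^ n * 20 ^ (2 * n)))%N.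
Proof.
move=> Hob Hd Hc.
have Hphi : phi (Lang n) = \sum_(k < l) phi (Rs k) by rewrite -Hc /phi partition_disjoint_bigcup.
pose F := fun k : 'I_l => absz (phi (Rs k)).
have H1 : (5 ^ n - 4 ^ n <= \sum_(k < l) F k)%N.
  rewrite -(@ler_nat int) natr_sum.
  have H45 : (4 ^ n <= 5 ^ n)%N by case: (n) => [//|n']; rewrite leq_exp2r.
  have E : phi (Lang n) = - ((5 ^ n - 4 ^ n)%N%:R) by rewrite phi_Lang natrB // !natrX opprB.
  have E2 : ((5 ^ n - 4 ^ n)%N%:R : int) = `|phi (Lang n)| by rewrite E normrN normr_nat.
  rewrite E2 Hphi. apply: le_trans (ler_norm_sum _ _ _) _. apply: ler_sum => k _.
  by rewrite /F natz abszE.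
pose M := (\max_(k < l) F k)%N.
have H2 : (\sum_(k < l) F k <= l * M)%N.
  have -> : (l * M = \sum_(k < l) M)%N by rewrite big_const_ord iter_addn_0 mulnC.
  apply: leq_sum => k _. exact: leq_bigmax.
have H3 : (M ^ 6 <= 36 ^ n * 20 ^ (2 * n))%N.
  rewrite /M. elim/big_ind: _.
  - by rewrite exp0n.
  - move=> x y Hx Hy. rewrite /maxn. by case: ifP.
  - move=> k _. exact: rect_ob.
apply: leq_trans (_ : ((l * M) ^ 6 <= _)%N).
  rewrite leq_exp2r //. exact: leq_trans H1 H2.
by rewrite expnMn leq_mul2l H3 orbT.
Qed.

Close Scope ring_scope.

Lemma pow_lt_strict (a b : R) (k : nat) : Rle 0 a -> Rlt a b -> Rlt (pow a k.+1) (pow b k.+1).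
Proof.
move=> Ha Hab. have Hb : Rlt 0 b by apply: Rle_lt_trans Ha Hab.
elim: k => [|k IH] /=.
  rewrite !Rmult_1_r. exact Hab.
apply: (Rle_lt_trans _ (Rmult a (Rmult b (pow b k)))).
  apply: Rmult_le_compat_l => //. exact: Rlt_le.
apply: Rmult_lt_compat_r => //. apply: Rmult_lt_0_compat => //. exact: pow_lt.
Qed.

Theorem mainTheorem9 :
  exists c : R, Rlt R0 c /\
  exists n0 : nat, forall n : nat, n0 <= n ->
  forall (l : nat) (Rs : 'I_l -> {set {set 'I_(2*n)}}),
    (forall k, ob_rectangle (Rs k)) ->
    (forall k1 k2 : 'I_l, k1 != k2 -> [disjoint Rs k1 & Rs k2]) ->
    \bigcup_(k < l) Rs k = Lang n ->
    Rle (Rpower (INR 2) (Rmult c (INR n))) (INR l).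
Proof.
exists (Rinv (IZR 108)). split.
  apply: Rinv_0_lt_compat. apply: IZR_lt. reflexivity.
exists 108 => n Hn l Rs Hob Hd Hc.
have H := numeric Hn (sum_bound Hob Hd Hc).
set y := Rpower (INR 2) (Rmult (Rinv (IZR 108)) (INR n)).
have Hy : Rlt 0 y by rewrite /y /Rpower; exact: exp_pos.
have H2 : Rlt 0 (INR 2) by apply: lt_0_INR; apply/ssrnat.ltP.
have Hy108 : pow y 108 = INR (2 ^ n).
  rewrite -(Rpower_pow 108 y Hy) /y Rpower_mult.
  have -> : Rmult (Rmult (Rinv (IZR 108)) (INR n)) (INR 108) = INR n.
    rewrite (INR_IZR_INZ 108) /= Rmult_comm -Rmult_assoc Rinv_r ?Rmult_1_l //.
  by rewrite (Rpower_pow n (INR 2) H2) expn_pow pow_INR.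
apply: Rnot_lt_le => Hlt.
have := pow_lt_strict 107 (pos_INR l) Hlt.
rewrite Hy108 -pow_INR -expn_pow => /INR_lt /ssrnat.leP.
by rewrite ltnNge H.
Qed.
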